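(* Let $\lambda_1,\dots,\lambda_n$ be real numbers and set $\lambda_0=\lambda_{n+1}=\infty$. Then $\lambda_i\ge\min(\lambda_{i-1},\lambda_{i+1})$ for every $i\in[n]$ if and only if there exist $x_1,\dots,x_{n-1}\in\mathbb{R}$ such that $\lambda_i=\min(x_i,x_{i-1})$ for every $i\in[n]$, where $x_0=x_n=\infty$. *)

(* Defs.v *)
From Stdlib Require Import Reals Arith.
From Coquelicot Require Import Coquelicot.
Open Scope R_scope.

Definition lam_ext (n : nat) (lam : nat -> R) (i : nat) : Rbar :=
  if (Nat.eqb i 0 || Nat.eqb i (S n))%bool then p_infty else Finite (lam i).

Definition x_ext (n : nat) (x : nat -> R) (i : nat) : Rbar :=
  if (Nat.eqb i 0 || Nat.eqb i n)%bool then p_infty else Finite (x i).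

(* Main.v *)
Require Import Defs.
From Stdlib Require Import Reals Arith Lia Lra.
From Coquelicot Require Import Coquelicot.
Open Scope R_scope.

Lemma min_mono (A B C D : Rbar) :
  Rbar_le A D -> Rbar_le B C -> Rbar_le (Rbar_min A B) (Rbar_min C D).
Proof.
  intros H1 H2. apply (Rbar_min_case_strong C D (fun m => Rbar_le (Rbar_min A B) m)); intros _.
  - apply (Rbar_le_trans _ B _); [apply Rbar_min_r|exact H2].
  - apply (Rbar_le_trans _ A _); [apply Rbar_min_l|exact H1].
Qed.

Lemma lam_in n lam i : (1 <= i <= n)%nat -> lam_ext n lam i = Finite (lam i).
Proof.
  intros H. unfold lam_ext.
  replace (Nat.eqb i 0) with false by (symmetry; apply Nat.eqb_neq; lia).
  replace (Nat.eqb i (S n)) with false by (symmetry; apply Nat.eqb_neq; lia).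
  reflexivity.
Qed.

Lemma x_in n x i : (1 <= i < n)%nat -> x_ext n x i = Finite (x i).
Proof.
  intros H. unfold x_ext.
  replace (Nat.eqb i 0) with false by (symmetry; apply Nat.eqb_neq; lia).
  replace (Nat.eqb i n) with false by (symmetry; apply Nat.eqb_neq; lia).
  reflexivity.
Qed.

Lemma lam0 n lam : lam_ext n lam 0 = p_infty.
Proof. reflexivity. Qed.
Lemma lamS n lam : lam_ext n lam (S n) = p_infty.
Proof. unfold lam_ext. rewrite Nat.eqb_refl, Bool.orb_true_r. reflexivity. Qed.
Lemma x0 n x : x_ext n x 0 = p_infty.
Proof. reflexivity. Qed.
Lemma xn n x : x_ext n x n = p_infty.
Proof. unfold x_ext. rewrite Nat.eqb_refl, Bool.orb_true_r. reflexivity. Qed.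

Theorem lemma8p1 (n : nat) (lam : nat -> R) :
  (forall i : nat, (1 <= i <= n)%nat ->
     Rbar_le (Rbar_min (lam_ext n lam (i - 1)) (lam_ext n lam (i + 1)))
             (Finite (lam i)))
  <->
  (exists x : nat -> R,
     forall i : nat, (1 <= i <= n)%nat ->
       Finite (lam i) = Rbar_min (x_ext n x i) (x_ext n x (i - 1))).
Proof.
  split.
  - intros H. exists (fun j => Rmax (lam j) (lam (j + 1)%nat)).
    intros i Hi. specialize (H i Hi).
    destruct (Nat.eq_dec i 1) as [E1|E1]; destruct (Nat.eq_dec i n) as [En|En].
    + subst. rewrite lam0 in H. replace (1+1)%nat with (S 1) in H by lia.
      rewrite lamS in H. simpl in H. contradiction.
    + subst i. simpl in H |- *. rewrite x0.
      rewrite (lam_in n lam 2) in H by lia. rewrite x_in by lia. simpl in H |- *.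
      f_equal. unfold Rmax. destruct (Rle_dec (lam 1%nat) (lam 2%nat)); lra.
    + subst i. replace (n+1)%nat with (S n) in H by lia. rewrite lamS in H.
      rewrite (lam_in n lam (n-1)) in H by lia. simpl in H.
      rewrite xn, x_in by lia. simpl.
      replace (n-1+1)%nat with n by lia.
      f_equal. unfold Rmax. destruct (Rle_dec (lam (n-1)%nat) (lam n)); lra.
    + rewrite (lam_in n lam (i-1)) in H by lia. rewrite (lam_in n lam (i+1)) in H by lia.
      simpl in H. rewrite (x_in n _ i) by lia. rewrite (x_in n _ (i-1)) by lia.
      simpl. replace (i-1+1)%nat with i by lia. f_equal.
      unfold Rmin in H. destruct (Rle_dec (lam (i-1)%nat) (lam (i+1)%nat));
      unfold Rmin, Rmax;
      repeat match goal with |- context [Rle_dec ?a ?b] => destruct (Rle_dec a b) | H0 : context [Rle_dec ?a ?b] |- _ => destruct (Rle_dec a b) end; lra.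
  - intros [x Hx] i Hi. rewrite (Hx i Hi). apply min_mono.
    + destruct (Nat.eq_dec i 1) as [E|E].
      * subst. simpl. rewrite ?lam0, ?x0. simpl. exact I.
      * rewrite (lam_in n lam (i-1)) by lia. rewrite (Hx (i-1)%nat) by lia. apply Rbar_min_l.
    + destruct (Nat.eq_dec i n) as [E|E].
      * subst. replace (n+1)%nat with (S n) by lia. rewrite lamS, xn. simpl. exact I.
      * rewrite (lam_in n lam (i+1)) by lia. rewrite (Hx (i+1)%nat) by lia. replace (i+1-1)%nat with i by lia. apply Rbar_min_r.
Qed.
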